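(* Let $\mathcal{F}$ be a class of simple graphs and consider the assertions: (1) $\mathcal{F}$ is closed under deleting edges; (2) $\equiv_{\mathcal{F}}$ is preserved under taking full complements, i.e.\ for all simple graphs $G$ and $H$ it holds that $G\equiv_{\mathcal{F}}H$ if and only if $\widehat{G}\equiv_{\mathcal{F}}\widehat{H}$; (3) $\mathrm{cl}(\mathcal{F})$ is closed under deleting edges; (4) $\mathrm{cl}(\mathcal{F})$ is closed under taking subgraphs, i.e.\ under deleting edges and vertices; (5) $\equiv_{\mathrm{cl}(\mathcal{F})}$ is preserved under taking full complements. Then (1) implies (2), (2) implies (3), and (3), (4), (5) are pairwise equivalent.
   Context: Graphs are finite, undirected, without multiple edges, possibly with loops; simple means without loops. A homomorphism maps edges to edges (possibly loops) and looped vertices to looped vertices; $\hom(F,G)$ counts homomorphisms. $G\equiv_{\mathcal{F}}H$ means $\hom(F,G)=\hom(F,H)$ for all $F\in\mathcal{F}$. $\mathrm{cl}(\mathcal{F})$ is the class of all simple graphs $K$ such that for all simple $G,H$, $G\equiv_{\mathcal{F}}H$ implies $\hom(K,G)=\hom(K,H)$. The full complement $\widehat{G}$ of a graph $G$ has vertex set $V(G)$; for distinct $u,v$, $uv$ is an edge of $\widehat G$ iff it is not an edge of $G$, and $v$ has a loop in $\widehat G$ iff it has no loop in $G$. *)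

(* Defs.v *)
(* Finite graphs (possibly with loops) on vertex set 'I_n,
   given by a symmetric boolean adjacency relation; a loop at v is adj v v. *)
From mathcomp Require Import all_boot.
Set Implicit Arguments. Unset Strict Implicit. Unset Printing Implicit Defensive.

Unset Implicit Arguments.
Record graph := Graph {
  vnum : nat;
  adj : rel 'I_vnum;
  adj_sym : symmetric adj }.
Set Implicit Arguments.

Definition simple (G : graph) : Prop := forall v, ~~ adj G v v.

Definition hom (F G : graph) : nat :=
  #|[set f : {ffun 'I_(vnum F) -> 'I_(vnum G)} |
     [forall u, forall v, adj F u v ==> adj G (f u) (f v)]]|.

Definition gclass := graph -> Prop.

Definition class_of_simple (C : gclass) : Prop := forall G, C G -> simple G.

Definition hom_equiv (C : gclass) (G H : graph) : Prop :=
  forall K, C K -> hom K G = hom K H.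

Definition cl (C : gclass) : gclass := fun K =>
  simple K /\
  forall G H, simple G -> simple H -> hom_equiv C G H -> hom K G = hom K H.

Lemma fcompl_sym (G : graph) : symmetric (fun u v : 'I_(vnum G) => ~~ adj G u v).
Proof. by move=> u v; rewrite (adj_sym G). Qed.

Definition fcompl (G : graph) : graph := Graph _ _ (@fcompl_sym G).

Definition del_rel (G : graph) (u v : 'I_(vnum G)) : rel 'I_(vnum G) :=
  fun x y => adj G x y && ~~ (((x == u) && (y == v)) || ((x == v) && (y == u))).

Lemma del_rel_sym (G : graph) (u v : 'I_(vnum G)) : symmetric (del_rel u v).
Proof.
move=> x y; rewrite /del_rel (adj_sym G); congr (_ && ~~ _).
by rewrite orbC [(y == u) && _]andbC [(y == v) && _]andbC.
Qed.

Definition del_edge (G : graph) (u v : 'I_(vnum G)) : graph :=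
  Graph _ _ (@del_rel_sym G u v).

Definition closed_del_edges (C : gclass) : Prop :=
  forall G (u v : 'I_(vnum G)), C G -> adj G u v -> C (del_edge u v).

Definition subgraph (H G : graph) : Prop :=
  exists f : 'I_(vnum H) -> 'I_(vnum G),
    injective f /\ forall x y, adj H x y -> adj G (f x) (f y).

Definition closed_subgraphs (C : gclass) : Prop :=
  forall G H, C G -> subgraph H G -> C H.

Definition compl_preserved (C : gclass) : Prop :=
  forall G H, simple G -> simple H ->
    (hom_equiv C G H <-> hom_equiv C (fcompl G) (fcompl H)).

(* Main.v *)
Require Import Defs.
From mathcomp Require Import all_boot.
Set Implicit Arguments. Unset Strict Implicit. Unset Printing Implicit Defensive.

Definition homT n (r : rel 'I_n) (T : finType) (e : rel T) : nat :=
  #|[set f : {ffun 'I_n -> T} | [forall u, forall v, r u v ==> e (f u) (f v)]]|.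

Lemma homE F G : hom F G = homT (adj F) (adj G).
Proof. by []. Qed.

Lemma homT_sum n (r : rel 'I_n) (T : finType) (e : rel T) :
  homT r e = \sum_(f : {ffun 'I_n -> T}) [forall u, forall v, r u v ==> e (f u) (f v)].
Proof.
rewrite /homT -sum1_card big_mkcond /=; apply: eq_bigr => f _.
by rewrite inE; case: ifP.
Qed.

Lemma eq_homT n (r r' : rel 'I_n) (T : finType) (e e' : rel T) :
  r =2 r' -> e =2 e' -> homT r e = homT r' e'.
Proof.
move=> hr he; rewrite !homT_sum; apply: eq_bigr => f _.
congr nat_of_bool; apply: eq_forallb => u; apply: eq_forallb => v.
by rewrite hr he.
Qed.

Lemma sum_bij (I J : finType) (h : J -> I) (F : I -> nat) :
  bijective h -> \sum_i F i = \sum_j F (h j).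
Proof. by move=> hb; rewrite (reindex h) //; apply: onW_bij. Qed.

Lemma hom_gof n (r : rel 'I_n) (T : finType) (E : rel T) :
  homT r (fun i j : 'I_#|T| => E (enum_val i) (enum_val j)) = homT r E.
Proof.
rewrite !homT_sum (sum_bij _ (h := fun f : {ffun 'I_n -> 'I_#|T|} => [ffun x => enum_val (f x)])).
  by apply: eq_bigr => f _; congr nat_of_bool; apply: eq_forallb => u;
     apply: eq_forallb => v; rewrite !ffunE.
exists (fun g : {ffun 'I_n -> T} => [ffun x => enum_rank (g x)]) => f;
  by apply/ffunP => x; rewrite !ffunE ?enum_valK ?enum_rankK.
Qed.

Lemma homT_pair n (r : rel 'I_n) (T1 T2 : finType) (E : rel (T1 * T2)) :
  homT r E = \sum_(f1 : {ffun 'I_n -> T1}) \sum_(f2 : {ffun 'I_n -> T2})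
     [forall u, forall v, r u v ==> E (f1 u, f2 u) (f1 v, f2 v)].
Proof.
rewrite homT_sum pair_bigA /=.
rewrite (sum_bij _ (h := fun p : {ffun 'I_n -> T1} * {ffun 'I_n -> T2} =>
            [ffun x => (p.1 x, p.2 x)])).
  by apply: eq_bigr => p _; congr nat_of_bool; apply: eq_forallb => u;
     apply: eq_forallb => v; rewrite !ffunE.
exists (fun f : {ffun 'I_n -> T1 * T2} => ([ffun x => (f x).1], [ffun x => (f x).2])).
  by case=> f1 f2 /=; congr pair; apply/ffunP => x; rewrite !ffunE.
by move=> f; apply/ffunP => x; rewrite !ffunE /=; case: (f x).
Qed.

Lemma homT_prod n (r : rel 'I_n) (T1 T2 : finType) (e1 : rel T1) (e2 : rel T2) :
  homT r (fun p q => e1 p.1 q.1 && e2 p.2 q.2) = homT r e1 * homT r e2.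
Proof.
rewrite homT_pair !homT_sum big_distrl /=; apply: eq_bigr => f1 _.
rewrite big_distrr /=; apply: eq_bigr => f2 _.
rewrite mulnb; congr nat_of_bool.
apply/forallP/andP => [H|[/forallP H1 /forallP H2] u].
  split; apply/forallP => u; apply/forallP => v; have /forallP/(_ v) := H u;
  by case: (r u v) => //= /andP[].
apply/forallP => v; have /forallP/(_ v) := H1 u; have /forallP/(_ v) := H2 u.
by case: (r u v) => //= -> ->.
Qed.

Lemma homT_mixed n (r : rel 'I_n) (T1 T2 : finType) (e1 : rel T1) (e2 : rel T2) :
  homT r (fun p q => ~~ (~~ e1 p.1 q.1 && e2 p.2 q.2)) =
  \sum_(f2 : {ffun 'I_n -> T2}) homT (fun u v => r u v && e2 (f2 u) (f2 v)) e1.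
Proof.
rewrite homT_pair exchange_big /=; apply: eq_bigr => f2 _.
rewrite homT_sum; apply: eq_bigr => f1 _; congr nat_of_bool.
apply: eq_forallb => u; apply: eq_forallb => v.
by case: (r u v); case: (e1 _ _); case: (e2 _ _).
Qed.

Definition npairs n (r : rel 'I_n) := #|[set p : 'I_n * 'I_n | r p.1 p.2]|.

Lemma spanning (C : gclass) : closed_del_edges C ->
  forall k (K : graph) (r : rel 'I_(vnum K)),
  #|[set p : 'I_(vnum K) * 'I_(vnum K) | adj K p.1 p.2 && ~~ r p.1 p.2]| <= k ->
  C K -> symmetric r -> (forall u v, r u v -> adj K u v) ->
  exists K', C K' /\ forall G, hom K' G = homT r (adj G).
Proof.
move=> hC; elim=> [|k IH] K r hk CK rs rK.
  exists K; split => // G; apply: eq_homT => // u v.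
  apply/idP/idP => [h|]; last exact: rK.
  apply: contraTT hk => nr; rewrite leqn0 -lt0n; apply/card_gt0P.
  by exists (u, v); rewrite inE /= h.
case: (boolP [exists p : 'I_(vnum K) * 'I_(vnum K), adj K p.1 p.2 && ~~ r p.1 p.2]).
  case/existsP => [[u v]] /= /andP[huv nr].
  have CK1 := hC K u v CK huv.
  apply: (IH (del_edge u v)) => //.
  - rewrite -ltnS; apply: leq_trans hk; apply: proper_card.
    apply/properP; split.
      apply/subsetP => [[x y]]; rewrite !inE /= /del_rel.
      by case/andP => /andP[-> _] ->.
    exists (u, v); first by rewrite inE /= huv.
    by rewrite inE /= /del_edge /del_rel /= !eqxx andbF.
  - move=> x y hr; rewrite /del_edge /del_rel /= rK //=.
    apply/negP => /orP[] /andP[/eqP ? /eqP ?]; subst.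
      by rewrite hr in nr.
    by rewrite rs hr in nr.
move=> hn; exists K; split => // G; apply: eq_homT => // u v.
apply/idP/idP => [h|]; last exact: rK.
apply: contraNT hn => nr; apply/existsP; exists (u, v); by rewrite /= h.
Qed.

Definition Nb n (a b : rel 'I_n) (G : graph) : nat :=
  #|[set f : {ffun 'I_n -> 'I_(vnum G)} | [forall u, forall v,
     (a u v ==> adj G (f u) (f v)) && (b u v ==> ~~ adj G (f u) (f v))]]|.

Lemma homT_symc n (a : rel 'I_n) (G : graph) :
  homT a (adj G) = homT (fun u v => a u v || a v u) (adj G).
Proof.
rewrite /homT; apply: eq_card => f; rewrite !inE.
apply/forallP/forallP => H u; apply/forallP => v.
  apply/implyP => /orP[] h.
    by have /forallP/(_ v)/implyP := H u; apply.
  by have /forallP/(_ u)/implyP := H v; rewrite adj_sym; apply.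
by apply/implyP => h; have /forallP/(_ v)/implyP := H u; apply; rewrite h.
Qed.

Lemma Nb_ind (K G H : graph)
  (hP : forall r : rel 'I_(vnum K), symmetric r -> (forall u v, r u v -> adj K u v) ->
        homT r (adj G) = homT r (adj H)) :
  forall k (a b : rel 'I_(vnum K)), #|[set p : 'I_(vnum K) * 'I_(vnum K) | b p.1 p.2]| <= k ->
  (forall u v, a u v -> adj K u v) -> (forall u v, b u v -> adj K u v) ->
  Nb a b G = Nb a b H.
Proof.
set n := vnum K in hP *.
have base: forall a : rel 'I_n, (forall u v, a u v -> adj K u v) ->
    Nb a (fun _ _ => false) G = Nb a (fun _ _ => false) H.
  move=> a Pa.
  have E X : Nb a (fun _ _ => false) X = homT (fun u v => a u v || a v u) (adj X).
    rewrite -homT_symc /Nb /homT; apply: eq_card => f; rewrite !inE.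
    by apply: eq_forallb => u; apply: eq_forallb => v; rewrite andbT.
  rewrite !E; apply: hP; first by move=> u v; rewrite orbC.
  by move=> u v /orP[] /Pa //; rewrite adj_sym.
have Nbext X (a b b' : rel 'I_n) : b =2 b' -> Nb a b X = Nb a b' X.
  move=> hb; rewrite /Nb; apply: eq_card => f; rewrite !inE.
  by apply: eq_forallb => u; apply: eq_forallb => v; rewrite hb.
elim=> [|k IH] a b hk Pa Pb.
  have hb : b =2 (fun _ _ => false).
    move=> u v /=; apply/negP => h.
    have : 0 < #|[set p : 'I_n * 'I_n | b p.1 p.2]|.
      by apply/card_gt0P; exists (u, v); rewrite inE.
    by rewrite lt0n -leqn0 hk.
  by rewrite !(Nbext _ a b _ hb); apply: base.
case: (boolP [exists p : 'I_n * 'I_n, b p.1 p.2]); last first.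
  move=> hn; have hb : b =2 (fun _ _ => false).
    by move=> u v /=; apply: contraNF hn => h; apply/existsP; exists (u, v).
  by rewrite !(Nbext _ a b _ hb); apply: base.
case/existsP => [[u v]] /= huv.
pose b' := fun x y => b x y && ~~ ((x == u) && (y == v)).
pose a' := fun x y => a x y || ((x == u) && (y == v)).
have split X : Nb a b' X = Nb a b X + Nb a' b' X.
  rewrite /Nb -!sum1_card big_mkcond [X in _ = X + _]big_mkcond [X in _ = _ + X]big_mkcond -big_split /=; apply: eq_bigr => f _.
  rewrite !inE.
  case: (boolP [forall u0, forall v0, (a u0 v0 ==> adj X (f u0) (f v0)) &&
                   (b' u0 v0 ==> ~~ adj X (f u0) (f v0))]) => H1.
    case hf: (adj X (f u) (f v)).
      have -> : [forall u0, forall v0, (a u0 v0 ==> adj X (f u0) (f v0)) &&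
                   (b u0 v0 ==> ~~ adj X (f u0) (f v0))] = false.
        apply/negP => /forallP/(_ u)/forallP/(_ v)/andP[_].
        by rewrite huv hf.
      rewrite (_ : [forall u0, forall v0, _] = true) //.
      apply/forallP => x; apply/forallP => y.
      have /forallP/(_ x)/forallP/(_ y)/andP[h1 h2] := H1.
      rewrite /a' h2 andbT; case: (boolP ((x == u) && (y == v))) => [/andP[/eqP -> /eqP ->]|_].
        by rewrite orbT hf.
      by rewrite orbF.
    have -> : [forall u0, forall v0, (a' u0 v0 ==> adj X (f u0) (f v0)) &&
                   (b' u0 v0 ==> ~~ adj X (f u0) (f v0))] = false.
      apply/negP => /forallP/(_ u)/forallP/(_ v)/andP[+ _].
      by rewrite /a' !eqxx orbT hf.
    rewrite (_ : [forall u0, forall v0, _] = true) //.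
    apply/forallP => x; apply/forallP => y.
    have /forallP/(_ x)/forallP/(_ y)/andP[h1 h2] := H1.
    rewrite h1 /=; apply/implyP => hxy.
    case: (boolP ((x == u) && (y == v))) => [/andP[/eqP -> /eqP ->]|hn].
      by rewrite hf.
    by move: h2; rewrite /b' hxy hn => /implyP; apply.
  have -> : [forall u0, forall v0, (a u0 v0 ==> adj X (f u0) (f v0)) &&
                   (b u0 v0 ==> ~~ adj X (f u0) (f v0))] = false.
    apply: contraNF H1 => /forallP H2; apply/forallP => x; apply/forallP => y.
    have /forallP/(_ y)/andP[h1 h2] := H2 x.
    by rewrite h1 /=; apply/implyP => /andP[hb _]; move/implyP: h2; apply.
  have -> : [forall u0, forall v0, (a' u0 v0 ==> adj X (f u0) (f v0)) &&
                   (b' u0 v0 ==> ~~ adj X (f u0) (f v0))] = false.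
    apply: contraNF H1 => /forallP H2; apply/forallP => x; apply/forallP => y.
    have /forallP/(_ y)/andP[h1 h2] := H2 x.
    by rewrite h2 andbT; apply/implyP => ha; move/implyP: h1; apply; rewrite /a' ha.
  by [].
have hb' : #|[set p : 'I_n * 'I_n | b' p.1 p.2]| <= k.
  rewrite -ltnS; apply: leq_trans hk; apply: proper_card; apply/properP; split.
    by apply/subsetP => [[x y]]; rewrite !inE /b' => /andP[].
  by exists (u, v); rewrite !inE //= /b' huv !eqxx.
have Pb' : forall x y, b' x y -> adj K x y by move=> x y /andP[/Pb].
have Pa' : forall x y, a' x y -> adj K x y.
  by move=> x y /orP[/Pa //|/andP[/eqP -> /eqP ->]]; apply: Pb.
have e1 := IH a b' hb' Pa Pb'.
have e2 := IH a' b' hb' Pa' Pb'.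
apply/eqP; rewrite -(eqn_add2r (Nb a' b' G)) -split e1 e2 -split //.
Qed.

Lemma compl_of_closed (C : gclass) (G H : graph) :
  closed_del_edges C -> hom_equiv C G H -> hom_equiv C (fcompl G) (fcompl H).
Proof.
move=> hC hGH K CK.
have hP : forall r : rel 'I_(vnum K), symmetric r -> (forall u v, r u v -> adj K u v) ->
        homT r (adj G) = homT r (adj H).
  move=> r rs rK.
  have [K' [CK' hK']] := spanning hC (leqnn _) CK rs rK.
  by rewrite -!hK'; apply: hGH.
have E X : hom K (fcompl X) = Nb (fun _ _ => false) (adj K) X.
  rewrite /hom /Nb; apply: eq_card => f; rewrite !inE.
  by apply: eq_forallb => u; apply: eq_forallb => v.
by rewrite !E; apply: (Nb_ind hP (leqnn _)).
Qed.

Lemma fcomplK_hom K G : hom K (fcompl (fcompl G)) = hom K G.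
Proof. by rewrite !homE; apply: eq_homT => // u v /=; rewrite negbK. Qed.

Lemma compl_pres_of_closed (C : gclass) : closed_del_edges C -> compl_preserved C.
Proof.
move=> hC G H _ _; split; first exact: compl_of_closed.
move=> h K CK; rewrite -fcomplK_hom -(fcomplK_hom K H).
exact: (compl_of_closed hC h CK).
Qed.

Definition gof (T : finType) (e : rel T) (es : symmetric e) : graph :=
  Graph #|T| (fun i j => e (enum_val i) (enum_val j)) (fun i j => es _ _).

Lemma hom_gofE K (T : finType) (e : rel T) (es : symmetric e) :
  hom K (gof es) = homT (adj K) e.
Proof. by rewrite homE /= hom_gof. Qed.

Lemma prod_sym (G : graph) (T : finType) (e : rel T) (es : symmetric e) :
  symmetric (fun p q : 'I_(vnum G) * T => adj G p.1 q.1 && e p.2 q.2).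
Proof. by move=> p q; rewrite adj_sym es. Qed.

Definition gprodT (G : graph) (T : finType) (e : rel T) (es : symmetric e) :=
  gof (@prod_sym G T e es).

Lemma hom_gprodT K G (T : finType) (e : rel T) (es : symmetric e) :
  hom K (gprodT G es) = hom K G * homT (adj K) e.
Proof.
rewrite /gprodT hom_gofE homE.
exact: (homT_prod (adj K) (adj G) e).
Qed.

Lemma equiv_prod (C : gclass) G H (T : finType) (e : rel T) (es : symmetric e) :
  hom_equiv C G H -> hom_equiv C (gprodT G es) (gprodT H es).
Proof. by move=> h K CK; rewrite !hom_gprodT h. Qed.

Lemma simple_gprodT G (T : finType) (e : rel T) (es : symmetric e) :
  (forall t, ~~ e t t) -> simple (gprodT G es).
Proof. by move=> he v /=; rewrite (negbTE (he _)) andbF. Qed.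

Lemma Fsub (F : gclass) : class_of_simple F -> forall K, F K -> cl F K.
Proof. by move=> hF K FK; split; [exact: hF | move=> G H _ _ h; exact: h]. Qed.

Lemma equiv_cl_F (F : gclass) G H : class_of_simple F ->
  hom_equiv (cl F) G H -> hom_equiv F G H.
Proof. by move=> hF h K FK; apply: h; apply: Fsub. Qed.

Lemma ne_sym m : symmetric (fun i j : 'I_m => i != j).
Proof. by move=> i j; rewrite eq_sym. Qed.

Lemma equiv_F_cl_any (F : gclass) X Y :
  hom_equiv F X Y -> hom_equiv (cl F) X Y.
Proof.
move=> h K [sK cK].
have hP := equiv_prod (@ne_sym (vnum K)) h.
have ne0 : forall t : 'I_(vnum K), ~~ (t != t) by move=> t; rewrite eqxx.
have e := cK _ _ (@simple_gprodT X _ _ (@ne_sym (vnum K)) ne0)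
   (@simple_gprodT Y _ _ (@ne_sym (vnum K)) ne0) hP.
move: e; rewrite !hom_gprodT => /eqP; rewrite eqn_pmul2r; first by move/eqP.
rewrite /homT; apply/card_gt0P; exists [ffun x => x]; rewrite inE.
apply/forallP => u; apply/forallP => v; apply/implyP => huv; rewrite !ffunE.
by apply: contraTneq huv => ->; rewrite (negbTE (sK v)).
Qed.

Lemma compl5 (F : gclass) : class_of_simple F -> compl_preserved F ->
  compl_preserved (cl F).
Proof.
move=> hF h2 G H sG sH; split => h.
  apply: equiv_F_cl_any; apply/(h2 G H sG sH); exact: equiv_cl_F h.
apply: equiv_F_cl_any; apply/(h2 G H sG sH); exact: equiv_cl_F h.
Qed.

Lemma homT_perm n (r : rel 'I_n) (h : 'I_n -> 'I_n) (T : finType) (e : rel T) :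
  injective h -> homT (fun u v => r (h u) (h v)) e = homT r e.
Proof.
move=> hi; rewrite !homT_sum.
rewrite (sum_bij _ (h := fun g : {ffun 'I_n -> T} => [ffun x => g (h x)])); last first.
  exists (fun f : {ffun 'I_n -> T} => [ffun a => f (invF hi a)]) => g;
    by apply/ffunP => x; rewrite !ffunE ?invF_f ?f_invF.
apply: eq_bigr => g _; congr nat_of_bool.
apply/forallP/forallP => H1 a.
  apply/forallP => b; apply/implyP => hab.
  have /forallP/(_ (invF hi b))/implyP := H1 (invF hi a).
  by rewrite !ffunE !f_invF; apply.
apply/forallP => b; rewrite !ffunE.
by have /forallP/(_ (h b)) := H1 (h a).
Qed.

Lemma npairs_perm n (r : rel 'I_n) (h : 'I_n -> 'I_n) :
  injective h -> npairs (fun u v => r (h u) (h v)) = npairs r.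
Proof.
move=> hi; rewrite /npairs -[in RHS](card_preimset _ (f := fun p : 'I_n * 'I_n => (h p.1, h p.2))).
  by apply: eq_card => p; rewrite !inE.
by move=> [a b] [c d] /= [/hi -> /hi ->].
Qed.

Lemma cl_simple (F : gclass) K : cl F K -> simple K.
Proof. by case. Qed.

Lemma D1 (F : gclass) (h5 : compl_preserved (cl F)) K (cK : cl F K) G H
  (sG : simple G) (sH : simple H) (hC : hom_equiv (cl F) G H)
  (S : finType) (e : rel S) (es : symmetric e) (ei : forall s, ~~ e s s) :
  \sum_(f2 : {ffun 'I_(vnum K) -> S}) homT (fun u v => adj K u v && e (f2 u) (f2 v)) (adj G) =
  \sum_(f2 : {ffun 'I_(vnum K) -> S}) homT (fun u v => adj K u v && e (f2 u) (f2 v)) (adj H).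
Proof.
have hc := (h5 G H sG sH).1 hC.
have hXY := equiv_prod es hc.
have sX := @simple_gprodT (fcompl G) _ _ es ei.
have sY := @simple_gprodT (fcompl H) _ _ es ei.
have := (h5 _ _ sX sY).1 hXY K cK.
have E X : hom K (fcompl (gprodT (fcompl X) es)) =
   \sum_(f2 : {ffun 'I_(vnum K) -> S}) homT (fun u v => adj K u v && e (f2 u) (f2 v)) (adj X).
  rewrite -homT_mixed homE -(hom_gof (adj K) (fun p q : 'I_(vnum X) * S => ~~ (~~ adj X p.1 q.1 && e p.2 q.2))).
  by [].
by rewrite !E.
Qed.

Lemma D2 n (U : {set 'I_n}) (Phi : {ffun 'I_n -> 'I_n} -> nat) :
  \sum_(f2 : {ffun 'I_n -> {x : 'I_n | x \in U}}) Phi [ffun x => val (f2 x)] =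
  \sum_(h : {ffun 'I_n -> 'I_n} | [forall x, h x \in U]) Phi h.
Proof.
pose phi := fun f2 : {ffun 'I_n -> {x : 'I_n | x \in U}} => [ffun x => val (f2 x)].
have inj : {in [set: {ffun 'I_n -> {x : 'I_n | x \in U}}] &, injective phi}.
  move=> f g _ _ hfg; apply/ffunP => x; apply: val_inj.
  by have := congr1 (fun k : {ffun 'I_n -> 'I_n} => k x) hfg; rewrite /phi !ffunE.
rewrite (eq_bigl (fun f2 => f2 \in [set: {ffun 'I_n -> {x : 'I_n | x \in U}}])); last first.
  by move=> f; rewrite inE.
rewrite -(big_imset (fun h => Phi h) inj) /=.
apply: eq_bigl => h; apply/imsetP/forallP.
  by case=> f2 _ ->; move=> x; rewrite ffunE; apply: (valP (f2 x)).
move=> hU.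
have [g hg] := fin_all_exists (fun x => ex_intro (fun s : {x : 'I_n | x \in U} => val s = h x) (exist _ (h x) (hU x)) erefl).
exists [ffun x => g x]; first by rewrite inE. rewrite /phi; apply/ffunP => x; by rewrite !ffunE hg.
Qed.

Lemma main5 (F : gclass) (h5 : compl_preserved (cl F)) K (cK : cl F K) G H
  (sG : simple G) (sH : simple H) (hC : hom_equiv (cl F) G H) :
  forall k (r : rel 'I_(vnum K)), npairs r < k -> symmetric r ->
  (forall u v, r u v -> adj K u v) -> homT r (adj G) = homT r (adj H).
Proof.
set n := vnum K.
elim=> // k IH r hk rs rK.
pose Phi X (h : {ffun 'I_n -> 'I_n}) :=
  homT (fun u v => adj K u v && r (h u) (h v)) (adj X).
have hS : forall U : {set 'I_n},
    \sum_(h : {ffun 'I_n -> 'I_n} | [forall x, h x \in U]) Phi G h =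
    \sum_(h : {ffun 'I_n -> 'I_n} | [forall x, h x \in U]) Phi H h.
  move=> U; rewrite -!D2.
  have es : symmetric (fun s t : {x : 'I_n | x \in U} => r (val s) (val t)).
    by move=> s t; rewrite rs.
  have ei : forall s : {x : 'I_n | x \in U}, ~~ r (val s) (val s).
    by move=> s; apply/negP => /rK; rewrite (negbTE (cl_simple cK _)).
  have := D1 h5 cK sG sH hC es ei.
  have E X f2 : homT (fun u v => adj K u v && r (val (f2 u)) (val (f2 v))) (adj X) =
     Phi X [ffun x => val (f2 x)].
    by apply: eq_homT => // u v; rewrite !ffunE.
  by under eq_bigr do rewrite E; under [in RHS]eq_bigr do rewrite E.
have hE : forall m (W : {set 'I_n}), #|W| < m ->
    \sum_(h : {ffun 'I_n -> 'I_n} | h @: [set: 'I_n] == W) Phi G h =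
    \sum_(h : {ffun 'I_n -> 'I_n} | h @: [set: 'I_n] == W) Phi H h.
  elim=> // m IHm W hW.
  have part X : \sum_(h : {ffun 'I_n -> 'I_n} | [forall x, h x \in W]) Phi X h =
      \sum_(W' : {set 'I_n} | W' \subset W)
         \sum_(h : {ffun 'I_n -> 'I_n} | h @: [set: 'I_n] == W') Phi X h.
    rewrite (partition_big (fun h : {ffun 'I_n -> 'I_n} => h @: [set: 'I_n])
               (fun W' => W' \subset W)).
      apply: eq_bigr => W' sW'; apply: eq_bigl => h.
      case: eqP => [e|_]; last by rewrite andbF.
      rewrite andbT; apply/forallP => x; apply: (subsetP sW'); rewrite -e.
      by apply: imset_f; rewrite inE.
    move=> h /forallP hx; apply/subsetP => y /imsetP[x _ ->]; exact: hx.
  have := hS W; rewrite !part (bigD1 W) //= [in RHS](bigD1 W) //=.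
  rewrite [in RHS](eq_bigr (fun W' => \sum_(h : {ffun 'I_n -> 'I_n} | h @: [set: 'I_n] == W') Phi G h)).
    by move/eqP; rewrite eqn_add2r => /eqP.
  move=> W' /andP[sW' nW']; apply/esym/IHm.
  rewrite -ltnS; apply: (leq_trans _ hW); rewrite ltnS; apply: proper_card; by rewrite properEneq nW'.
have hT := hE _ [set: 'I_n] (ltnSn _).
have injh : forall h : {ffun 'I_n -> 'I_n}, h @: [set: 'I_n] == [set: 'I_n] -> injective h.
  move=> h /eqP e.
  have : #|h @: [set: 'I_n]| == #|[set: 'I_n]| by rewrite e.
  by move/imset_injP => hi x y hxy; apply: hi; rewrite ?inE.
pose small (h : {ffun 'I_n -> 'I_n}) :=
  npairs (fun u v => adj K u v && r (h u) (h v)) < npairs r.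
have big_case (X : graph) (h : {ffun 'I_n -> 'I_n}) : h @: [set: 'I_n] == [set: 'I_n] -> ~~ small h ->
    Phi X h = 1 * homT r (adj X).
  move=> hh hs; rewrite mul1n -(homT_perm _ _ (injh h hh)).
  apply: eq_homT => // u v; apply/idP/idP => [/andP[] //|hr].
  rewrite hr andbT.
  have sub : [set p : 'I_n * 'I_n | adj K p.1 p.2 && r (h p.1) (h p.2)] \subset
             [set p : 'I_n * 'I_n | r (h p.1) (h p.2)].
    by apply/subsetP => p; rewrite !inE => /andP[].
  have : [set p : 'I_n * 'I_n | adj K p.1 p.2 && r (h p.1) (h p.2)] ==
             [set p : 'I_n * 'I_n | r (h p.1) (h p.2)].
    rewrite eqEcard sub /=.
    have := npairs_perm r (injh h hh); rewrite /npairs => ->.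
    by move: hs; rewrite /small /npairs -leqNgt.
  move/eqP/setP/(_ (u, v)); rewrite !inE /= hr andbT => ->.
  by [].
move: hT; rewrite (bigID small) [in RHS](bigID small) /=.
rewrite [in RHS](eq_bigr (fun h => Phi G h)); last first.
  move=> h /andP[hh hs]; apply/esym; apply: IH.
  - exact: leq_trans hs hk.
  - by move=> u v; rewrite adj_sym rs.
  - by move=> u v /andP[].
move/eqP; rewrite eqn_add2l.
rewrite (eq_bigr (fun _ => 1 * homT r (adj G))); last by move=> h /andP[]; apply: big_case.
rewrite [in X in _ == X](eq_bigr (fun _ => 1 * homT r (adj H))); last by move=> h /andP[]; apply: big_case.
rewrite -!big_distrl /= eqn_pmul2l; first by move/eqP.
have h0 : ([ffun x => x] @: [set: 'I_n] == [set: 'I_n]) && ~~ small [ffun x => x].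
  apply/andP; split.
    rewrite eqEsubset subsetT /=; apply/subsetP => x _.
    by apply/imsetP; exists x; rewrite ?inE ?ffunE.
  rewrite /small -leqNgt /npairs; apply: subset_leq_card; apply/subsetP => p.
  by rewrite !inE !ffunE => hp; rewrite hp rK.
by rewrite (bigD1 [ffun x => x]) //=.
Qed.

Lemma five_three (F : gclass) (h5 : compl_preserved (cl F)) : closed_del_edges (cl F).
Proof.
move=> K u v cK huv; split.
  by move=> x /=; rewrite /del_rel (negbTE (cl_simple cK x)).
move=> G H sG sH hGH.
have hC : hom_equiv (cl F) G H by move=> K' [_ cK']; apply: cK'.
rewrite !homE; apply: (main5 h5 cK sG sH hC (ltnSn _)).
  exact: del_rel_sym.
by move=> x y /andP[].
Qed.

Lemma fiber h k (f : 'I_h -> 'I_k) (finj : injective f) (T : finType) (phi0 : {ffun 'I_h -> T}) :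
  #|[set g : {ffun 'I_k -> T} | [ffun x => g (f x)] == phi0]| = #|T| ^ (k - h).
Proof.
pose Fm (a : 'I_k) := [pred y : T | [forall x, (f x == a) ==> (y == phi0 x)]].
have -> : #|[set g : {ffun 'I_k -> T} | [ffun x => g (f x)] == phi0]| = #|family Fm|.
  apply: eq_card => g; rewrite inE; apply/eqP/familyP.
    move=> hg a; rewrite inE; apply/forallP => x; apply/implyP => /eqP <-.
    by rewrite -hg ffunE.
  move=> hg; apply/ffunP => x; rewrite ffunE.
  by have := hg (f x); rewrite inE => /forallP/(_ x); rewrite eqxx => /eqP.
rewrite card_family foldrE big_map big_enum /=.
pose im := f @: [set: 'I_h].
rewrite (eq_bigr (fun i => if i \in im then 1 else #|T|)); last first.
  move=> i _; case: ifP => [/imsetP[x0 _ ->]|hi].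
    rewrite -(card1 (phi0 x0)); apply: eq_card => y; rewrite !inE.
    apply/forallP/eqP => [/(_ x0)|-> x]; first by rewrite eqxx => /eqP.
    by apply/implyP => /eqP/finj ->.
  apply: eq_card => y; rewrite !inE; apply/forallP => x; apply/implyP => /eqP hx.
  by move: hi; rewrite -hx imset_f ?inE.
rewrite (bigID (fun i => i \in im)) /= big1 ?mul1n; last by move=> i ->.
rewrite (eq_bigr (fun _ => #|T|)); last by move=> i /negbTE ->.
rewrite (eq_bigl (fun i => i \in ~: im)); last by move=> i; rewrite !inE.
rewrite prod_nat_const; congr (_ ^ _).
have e1 : #|im| = h by rewrite card_imset // cardsT card_ord.
have hc : h + #|~: im| = k by rewrite -e1 cardsC card_ord.
by rewrite -[#|~: im|](addKn h) hc.
Qed.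

Lemma count_sub h k (f : 'I_h -> 'I_k) (finj : injective f) (s : rel 'I_h)
  (T : finType) (e : rel T) :
  homT (fun a b => [exists x, exists y, (f x == a) && (f y == b) && s x y]) e =
  homT s e * #|T| ^ (k - h).
Proof.
rewrite !homT_sum.
transitivity (\sum_(g : {ffun 'I_k -> T})
   [forall x, forall y, s x y ==> e ([ffun x => g (f x)] x) ([ffun x => g (f x)] y)]).
  apply: eq_bigr => g _; congr nat_of_bool.
  apply/forallP/forallP => H1 x.
    apply/forallP => y; apply/implyP => hs; rewrite !ffunE.
    have /forallP/(_ (f y))/implyP := H1 (f x); apply.
    by apply/existsP; exists x; apply/existsP; exists y; rewrite !eqxx.
  apply/forallP => y; apply/implyP => /existsP[x0 /existsP[y0 /andP[/andP[/eqP <- /eqP <-] hs]]].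
  by have /forallP/(_ y0)/implyP := H1 x0; rewrite !ffunE; apply.
rewrite (partition_big (fun g : {ffun 'I_k -> T} => [ffun x => g (f x)]) xpredT) //=.
rewrite big_distrl /=; apply: eq_bigr => phi0 _.
rewrite (eq_bigr (fun _ => 1 * [forall x, forall y, s x y ==> e (phi0 x) (phi0 y)])); last first.
  by move=> g /eqP ->; rewrite mul1n.
rewrite -big_distrl /= mulnC; congr (_ * _).
rewrite -(fiber finj phi0) -sum1_card; apply: eq_bigl => g; by rewrite inE.
Qed.

Lemma homT_false n (T : finType) (e : rel T) : homT (fun _ _ : 'I_n => false) e = #|T| ^ n.
Proof.
rewrite /homT (_ : [set f : {ffun 'I_n -> T} | _] = setT) ?cardsT ?card_ffun ?card_ord //.
by apply/setP => f; rewrite !inE; apply/forallP => u; apply/forallP.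
Qed.

Lemma homT_le n (r : rel 'I_n) (T : finType) (e : rel T) : homT r e <= #|T| ^ n.
Proof. by rewrite /homT; apply: leq_trans (max_card _) _; rewrite card_ffun card_ord. Qed.

Lemma homT_0 n (r : rel 'I_n) (T : finType) (e : rel T) : n = 0 -> homT r e = 1.
Proof.
move=> n0; subst n.
rewrite /homT (_ : [set f : {ffun 'I_0 -> T} | _] = setT) ?cardsT ?card_ffun ?card_ord //.
by apply/setP => f; rewrite !inE; apply/forallP => -[].
Qed.

Lemma three_four (F : gclass) : closed_del_edges (cl F) -> closed_subgraphs (cl F).
Proof.
move=> h3 K H' cK [f [finj fE]].
have sK : simple K by case: cK.
split.
  by move=> x; apply/negP => /fE; rewrite (negbTE (sK _)).
move=> G G' sG sG' hGG'.
have good : forall r : rel 'I_(vnum K), symmetric r -> (forall u v, r u v -> adj K u v) ->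
    homT r (adj G) = homT r (adj G').
  move=> r rs rK; have [K' [cK' hK']] := spanning h3 (leqnn _) cK rs rK.
  by rewrite -!hK'; case: cK' => _; apply.
pose r := fun a b => [exists x, exists y, (f x == a) && (f y == b) && adj H' x y].
have e1 : homT r (adj G) = homT r (adj G').
  apply: good.
    move=> a b; apply/existsP/existsP => -[x /existsP[y hxy]];
      exists y; apply/existsP; exists x; move: hxy;
      by rewrite adj_sym; case/andP => /andP[-> ->] ->.
  by move=> a b /existsP[x /existsP[y /andP[/andP[/eqP <- /eqP <-] /fE]]].
rewrite !count_sub // !card_ord -!homE in e1.
have e0 : homT (fun _ _ : 'I_(vnum K) => false) (adj G) =
          homT (fun _ _ : 'I_(vnum K) => false) (adj G') by apply: good.
rewrite !homT_false !card_ord in e0.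
case hk: (vnum K - vnum H') => [|d].
  by move: e1; rewrite hk !expn0 !muln1.
have kpos : 0 < vnum K by move: hk; case: (vnum K).
have eN : vnum G = vnum G' by apply/eqP; rewrite -(eqn_exp2r _ _ kpos) e0.
case: (posnP (vnum G)) => hN.
  case: (posnP (vnum H')) => hh.
    by rewrite !homE !homT_0.
  have z X : vnum X = 0 -> hom H' X = 0.
    move=> hX; apply/eqP; rewrite -leqn0; rewrite homE; apply: leq_trans (homT_le _ _) _.
    by rewrite card_ord hX exp0n.
  by rewrite !z // -eN.
move: e1; rewrite hk -eN => /eqP; rewrite eqn_pmul2r ?expn_gt0 ?hN //.
by move/eqP.
Qed.

Lemma four_three (F : gclass) : closed_subgraphs (cl F) -> closed_del_edges (cl F).
Proof.
move=> h4 K u v cK huv; apply: (h4 K) => //.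
exists id; split => // x y /andP[] //.
Qed.

Unset Implicit Arguments.
Theorem theorem13 (F : gclass) (hF : class_of_simple F) :
  (closed_del_edges F -> compl_preserved F) /\
  (compl_preserved F -> closed_del_edges (cl F)) /\
  (closed_del_edges (cl F) <-> closed_subgraphs (cl F)) /\
  (closed_del_edges (cl F) <-> compl_preserved (cl F)) /\
  (closed_subgraphs (cl F) <-> compl_preserved (cl F)).
Proof.
have h35 : closed_del_edges (cl F) -> compl_preserved (cl F) := @compl_pres_of_closed (cl F).
have h53 : compl_preserved (cl F) -> closed_del_edges (cl F) := @five_three F.
split; first exact: compl_pres_of_closed.
split; first by move=> h2; apply: h53; apply: compl5.
split; first by split; [apply: three_four | apply: four_three].
split; first by split.
split => h.
  by apply: h35; apply: four_three.
by apply: three_four; apply: h53.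
Qed.
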